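(* Let $\mathcal A_1,\mathcal B_1:U_1\to V_1$ be surjective linear maps of finite-dimensional vector spaces over a field $\mathbb F$. Let $U_2=U_1/\operatorname{Ker}\mathcal B_1$, $V_2=V_1/\mathcal A_1(\operatorname{Ker}\mathcal B_1)$, and let $\mathcal A_2,\mathcal B_2:U_2\to V_2$ be the maps induced by $\mathcal A_1,\mathcal B_1$; similarly let $U_3=U_2/\operatorname{Ker}\mathcal B_2$. Let $(A_1,B_1)$ and $(A_2,B_2)$ be the matrix pairs of $(\mathcal A_1,\mathcal B_1)$ and $(\mathcal A_2,\mathcal B_2)$ in arbitrary bases, and take any regularizing decomposition of $(A_1,B_1)$. Then a regularizing decomposition of $(A_2,B_2)$ is obtained from it by deleting all summands $(L_1,R_1)=(0_{01},0_{01})$, replacing each summand $(L_k,R_k)$ with $k\ge2$ by $(L_{k-1},R_{k-1})$, and leaving the regular part unchanged. The number of summands $(L_1,R_1)$ in the decomposition of $(A_1,B_1)$ equals $\dim U_1-2\dim U_2+\dim U_3$.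
   Context: $J_k(0)$ denotes the $k\times k$ nilpotent Jordan block with ones directly below the diagonal. $L_k$ and $R_k$ are the $(k-1)\times k$ matrices obtained from $I_k$ by deleting its last row, respectively its first row ($L_1=R_1=0_{01}$ is the $0\times1$ matrix). Direct sums of matrix pairs are blockwise. Two matrix pairs $(A,B)$, $(A',B')$ are equivalent if $SA=A'R$, $SB=B'R$ for nonsingular $S,R$. A regularizing decomposition of a matrix pair $(A,B)$ is a direct sum $(I_r,D)\oplus(M_1,N_1)\oplus\dots\oplus(M_t,N_t)$ equivalent to $(A,B)$, in which $D$ is $r\times r$ nonsingular (the regular part is $(I_r,D)$) and each $(M_i,N_i)$ is one of $(I_k,J_k(0))$, $(J_k(0),I_k)$, $(L_k,R_k)$, $(L_k^T,R_k^T)$, $k\ge1$. *)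

(* Defs.v *)
From HB Require Import structures.
From mathcomp Require Import all_boot all_order all_algebra.
Set Implicit Arguments. Unset Strict Implicit. Unset Printing Implicit Defensive.
Import Order.TTheory GRing.Theory Num.Theory.
Local Open Scope ring_scope.

(* Convention: a linear map F^n -> F^m is a matrix 'M_(m, n) acting on
   column vectors 'cV_n (as in the paper). *)

Section Defs.
Variable F : fieldType.

Record mxpair := MxPair {
  mp_m : nat; mp_n : nat;
  mp_A : 'M[F]_(mp_m, mp_n); mp_B : 'M[F]_(mp_m, mp_n) }.

Definition dsum (p q : mxpair) : mxpair :=
  @MxPair (mp_m p + mp_m q) (mp_n p + mp_n q)
    (block_mx (mp_A p) 0 0 (mp_A q)) (block_mx (mp_B p) 0 0 (mp_B q)).

Definition empty_pair : mxpair := @MxPair 0 0 0 0.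

(* (A,B) ~ (A',B') iff S A = A' R, S B = B' R with S, R nonsingular
   (invertibility expressed by two-sided inverses, which forces equal sizes). *)
Definition pair_equiv (p q : mxpair) : Prop :=
  exists (S : 'M[F]_(mp_m q, mp_m p)) (S' : 'M[F]_(mp_m p, mp_m q))
         (R : 'M[F]_(mp_n q, mp_n p)) (R' : 'M[F]_(mp_n p, mp_n q)),
    [/\ S *m S' = 1%:M, S' *m S = 1%:M, R *m R' = 1%:M & R' *m R = 1%:M] /\
    S *m mp_A p = mp_A q *m R /\ S *m mp_B p = mp_B q *m R.

Definition Jnil (k : nat) : 'M[F]_k :=
  \matrix_(i < k, j < k) (if val i == (val j).+1 then 1 else 0).

Definition Lmx (k : nat) : 'M[F]_(k.-1, k) :=
  \matrix_(i < k.-1, j < k) (if val j == val i then 1 else 0).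
Definition Rmx (k : nat) : 'M[F]_(k.-1, k) :=
  \matrix_(i < k.-1, j < k) (if val j == (val i).+1 then 1 else 0).

End Defs.

Inductive kind := KIJ
                | KJI
                | KL
                | KLT.

Definition summand (F : fieldType) (x : kind * nat) : mxpair F :=
  let k := x.2 in
  match x.1 with
  | KIJ => MxPair 1%:M (Jnil F k)
  | KJI => MxPair (Jnil F k) 1%:M
  | KL  => MxPair (Lmx F k) (Rmx F k)
  | KLT => MxPair (Lmx F k)^T (Rmx F k)^T
  end.

Definition decomp_pair (F : fieldType) (r : nat) (D : 'M[F]_r)
    (s : seq (kind * nat)) : mxpair F :=
  dsum (MxPair 1%:M D) (foldr (@dsum F) (empty_pair F) (map (@summand F) s)).

Definition regdec (F : fieldType) (m n : nat) (A B : 'M[F]_(m, n))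
    (r : nat) (D : 'M[F]_r) (s : seq (kind * nat)) : Prop :=
  [/\ D \in unitmx, all (fun x => 0 < x.2)%N s
    & pair_equiv (MxPair A B) (decomp_pair D s)].

Definition shift_summand (x : kind * nat) : seq (kind * nat) :=
  match x with
  | (KL, k.+2) => [:: (KL, k.+1)]
  | (KL, _) => [::]
  | _ => [:: x]
  end.
Definition shift_decomp (s : seq (kind * nat)) : seq (kind * nat) :=
  flatten (map shift_summand s).

Definition isL1 (x : kind * nat) : bool :=
  match x with (KL, 1%N) => true | _ => false end.

(* P : 'M_(k, n) is (the coordinate form of) a quotient map F^n -> F^n / K:
   P is surjective and its kernel is exactly K. *)
Definition quotient_map (F : fieldType) (k n : nat) (P : 'M[F]_(k, n))
    (K : 'cV[F]_n -> Prop) : Prop :=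
  \rank P = k /\ forall x : 'cV[F]_n, P *m x = 0 <-> K x.

(* Main.v *)
Require Import Defs.
From HB Require Import structures.
From mathcomp Require Import all_boot all_order all_algebra.
From mathcomp Require Import zify.
Set Implicit Arguments. Unset Strict Implicit. Unset Printing Implicit Defensive.
Import Order.TTheory GRing.Theory Num.Theory.
Local Open Scope ring_scope.

Section L.
Variable F : fieldType.

Lemma colmul a b p (P : 'M[F]_(a, b)) (X : 'M[F]_(b, p)) j :
  col j (P *m X) = P *m col j X.
Proof. by rewrite !colE mulmxA. Qed.

Lemma mx_cols0 a p (M : 'M[F]_(a, p)) : (forall j, col j M = 0) -> M = 0.
Proof.
move=> H; apply/matrixP => i j.
have := congr1 (fun v : 'cV_a => v i 0) (H j).
by rewrite !mxE.
Qed.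

Lemma ker_mx a b c (P : 'M[F]_(a, c)) (B : 'M[F]_(b, c)) :
  (forall x : 'cV_c, P *m x = 0 -> B *m x = 0) ->
  forall p (X : 'M[F]_(c, p)), P *m X = 0 -> B *m X = 0.
Proof.
move=> H p X PX; apply: mx_cols0 => j; rewrite colmul; apply: H.
by rewrite -colmul PX; apply/matrixP => i k; rewrite !mxE.
Qed.

Lemma eqker_rank a b c (P : 'M[F]_(a, c)) (B : 'M[F]_(b, c)) :
  (forall x : 'cV_c, P *m x = 0 <-> B *m x = 0) -> \rank P = \rank B.
Proof.
move=> H.
have sub : forall a b (P : 'M[F]_(a, c)) (B : 'M[F]_(b, c)),
   (forall x : 'cV_c, P *m x = 0 -> B *m x = 0) ->
   (kermx P^T <= kermx B^T)%MS.
  move=> a' b' P' B' H'; apply/sub_kermxP.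
  apply: trmx_inj; rewrite trmx_mul trmx0 trmxK.
  apply: (ker_mx H'); apply: trmx_inj; rewrite trmx_mul trmxK trmx0.
  exact: mulmx_ker.
have e : \rank (kermx P^T) = \rank (kermx B^T).
  apply: eqmx_rank; rewrite sub //= ?sub //; by move=> x /H.
move: e; rewrite !mxrank_ker !mxrank_tr.
have := rank_leq_col P; have := rank_leq_col B; lia.
Qed.

Lemma free_rinv a b (P : 'M[F]_(a, b)) : \rank P = a -> exists Pr, P *m Pr = 1%:M.
Proof. by move=> h; apply/row_freeP; rewrite /row_free h. Qed.

Lemma free_of_inv a b (S : 'M[F]_(a, b)) S' : S *m S' = 1%:M -> row_free S.
Proof. by move=> h; apply/row_freeP; exists S'. Qed.

Lemma rank_inv a b (S : 'M[F]_(a, b)) S' : S *m S' = 1%:M -> \rank S = a.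
Proof. by move=> /free_of_inv /eqP. Qed.

Lemma size_inv a b (S : 'M[F]_(a, b)) S' : S *m S' = 1%:M -> (a <= b)%N.
Proof. by move=> /rank_inv <-; apply: rank_leq_col. Qed.

Lemma cancel_r a b c (X Y : 'M[F]_(a, b)) (P : 'M[F]_(b, c)) :
  \rank P = b -> X *m P = Y *m P -> X = Y.
Proof.
move=> /free_rinv [Pr hP] e.
by rewrite -[X]mulmx1 -[Y]mulmx1 -hP !mulmxA e.
Qed.

Lemma cancel_l a b c (X Y : 'M[F]_(b, c)) (S : 'M[F]_(a, b)) S' :
  S' *m S = 1%:M -> S *m X = S *m Y -> X = Y.
Proof.
move=> h e.
by rewrite -[X]mul1mx -[Y]mul1mx -h -!mulmxA e.
Qed.

Lemma quot_unique k k0 n (P : 'M[F]_(k, n)) (P0 : 'M[F]_(k0, n)) :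
  \rank P = k -> \rank P0 = k0 ->
  (forall x : 'cV_n, P *m x = 0 <-> P0 *m x = 0) ->
  exists T T', [/\ P0 = T *m P, P = T' *m P0, T *m T' = 1%:M & T' *m T = 1%:M].
Proof.
move=> rP rP0 H.
have gen : forall k k0 (P : 'M[F]_(k, n)) (P0 : 'M[F]_(k0, n)),
   \rank P = k -> (forall x : 'cV_n, P *m x = 0 -> P0 *m x = 0) ->
   exists T, P0 = T *m P.
  move=> a a0 Q Q0 rQ HQ; have [Qr hQ] := free_rinv rQ.
  exists (Q0 *m Qr).
  have : Q0 *m (Qr *m Q - 1%:M) = 0.
    apply: (ker_mx HQ).
    by rewrite mulmxBr mulmxA hQ mul1mx mulmx1 subrr.
  by rewrite mulmxBr mulmx1 mulmxA => /eqP; rewrite subr_eq0 => /eqP ->.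
have [T eT] := gen _ _ _ _ rP (fun x => proj1 (H x)).
have [T' eT'] := gen _ _ _ _ rP0 (fun x => proj2 (H x)).
exists T, T'; split => //.
  apply: (cancel_r rP0); by rewrite mul1mx -mulmxA -eT' -eT.
apply: (cancel_r rP); by rewrite mul1mx -mulmxA -eT -eT'.
Qed.

End L.

Section L2.
Variable F : fieldType.

Definition qrel (p q : mxpair F) : Prop :=
  exists (P : 'M[F]_(mp_n q, mp_n p)) (Q : 'M[F]_(mp_m q, mp_m p)),
  [/\ quotient_map P (fun x => mp_B p *m x = 0),
      quotient_map Q (fun y => exists x, mp_B p *m x = 0 /\ y = mp_A p *m x),
      mp_A q *m P = Q *m mp_A p & mp_B q *m P = Q *m mp_B p].

Lemma equiv_sizes (p q : mxpair F) : pair_equiv p q -> mp_m p = mp_m q /\ mp_n p = mp_n q.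
Proof.
move=> [S [S' [R [R' [[h1 h2 h3 h4] _]]]]].
have := size_inv h1; have := size_inv h2; have := size_inv h3; have := size_inv h4.
lia.
Qed.

Lemma transport (p p' q q' : mxpair F) : pair_equiv p p' -> qrel p q -> qrel p' q' ->
  pair_equiv q q'.
Proof.
move=> [S [S' [R [R' [[h1 h2 h3 h4] [eA eB]]]]]].
move=> [P [Q [[rP kP] [rQ kQ] eA1 eB1]]].
move=> [P' [Q' [[rP' kP'] [rQ' kQ'] eA2 eB2]]].
have rP'R : \rank (P' *m R) = mp_n q' by rewrite mxrankMfree // (free_of_inv h3).
have rQ'S : \rank (Q' *m S) = mp_m q' by rewrite mxrankMfree // (free_of_inv h1).
have [T [T' [eT eT' iT iT']]] : exists T T', [/\ P' *m R = T *m P, P = T' *m (P' *m R),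
      T *m T' = 1%:M & T' *m T = 1%:M].
  apply: quot_unique => // x; split => [/kP bx | e].
    by rewrite -mulmxA; apply/kP'; rewrite mulmxA -eB -mulmxA bx mulmx0.
  apply/kP; apply: (cancel_l h2); rewrite mulmx0 mulmxA eB -mulmxA; apply/kP'.
  by rewrite mulmxA.
have [U [U' [eU eU' iU iU']]] : exists U U', [/\ Q' *m S = U *m Q, Q = U' *m (Q' *m S),
      U *m U' = 1%:M & U' *m U = 1%:M].
  apply: quot_unique => // y; split => [/kQ [x [bx ->]] | e].
    rewrite -mulmxA; apply/kQ'; exists (R *m x); split.
      by rewrite mulmxA -eB -mulmxA bx mulmx0.
    by rewrite !mulmxA eA.
  apply/kQ; rewrite -mulmxA in e; move/kQ': e => [x' [bx' ey]].
  exists (R' *m x'); split.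
    apply: (cancel_l h2); rewrite mulmx0 !mulmxA eB -(mulmxA _ R) h3 mulmx1.
    done.
  apply: (cancel_l h2); rewrite ey !mulmxA eA -(mulmxA _ R) h3 mulmx1.
  done.
exists U, U', T, T'; split => //; split.
  apply: (cancel_r rP); rewrite -!mulmxA eA1 -eT mulmxA -eU -mulmxA eA.
  by rewrite !mulmxA eA2.
apply: (cancel_r rP); rewrite -!mulmxA eB1 -eT mulmxA -eU -mulmxA eB.
by rewrite !mulmxA eB2.
Qed.

Lemma qrel_equiv_r (p q q' : mxpair F) : qrel p q -> pair_equiv q q' -> qrel p q'.
Proof.
move=> [P [Q [[rP kP] [rQ kQ] eA1 eB1]]] e.
have [sm sn] := equiv_sizes e.
move: e => [S [S' [R [R' [[h1 h2 h3 h4] [eA eB]]]]]].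
exists (R *m P), (S *m Q); split.
- split.
    have le : (\rank P <= \rank (R *m P))%N.
      by rewrite {1}(_ : P = R' *m (R *m P)) ?mxrankM_maxr // mulmxA h4 mul1mx.
    apply/eqP; rewrite eqn_leq rank_leq_row /=; lia.
  move=> x; rewrite -mulmxA; split => [e|/kP ->]; last by rewrite mulmx0.
  by apply/kP; apply: (cancel_l h4); rewrite e mulmx0.
- split.
    have le : (\rank Q <= \rank (S *m Q))%N.
      by rewrite {1}(_ : Q = S' *m (S *m Q)) ?mxrankM_maxr // mulmxA h2 mul1mx.
    apply/eqP; rewrite eqn_leq rank_leq_row /=; lia.
  move=> x; rewrite -mulmxA; split => [e|/kQ ->]; last by rewrite mulmx0.
  by apply/kQ; apply: (cancel_l h2); rewrite e mulmx0.
- by rewrite mulmxA -eA -!mulmxA eA1.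
- by rewrite mulmxA -eB -!mulmxA eB1.
Qed.

End L2.

Section L3.
Variable F : fieldType.

Lemma col_mx_eq0 a b p (X : 'M[F]_(a, p)) (Y : 'M[F]_(b, p)) :
  col_mx X Y = 0 <-> X = 0 /\ Y = 0.
Proof.
split; last by move=> [-> ->]; rewrite col_mx0.
by rewrite -col_mx0 => /eq_col_mx.
Qed.

Lemma qrel_dsum (p q p' q' : mxpair F) : qrel p q -> qrel p' q' ->
  qrel (dsum p p') (dsum q q').
Proof.
move=> [P [Q [[rP kP] [rQ kQ] eA eB]]] [P' [Q' [[rP' kP'] [rQ' kQ'] eA' eB']]].
exists (block_mx P 0 0 P'), (block_mx Q 0 0 Q'); split.
- split; first by rewrite rank_diag_block_mx rP rP'.
  move=> x; rewrite /= -[x]vsubmxK !mul_block_col !mul0mx !addr0 !add0r.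
  rewrite !col_mx_eq0; split => [[/kP h1 /kP' h2]|[/kP h1 /kP' h2]] //.
- split; first by rewrite rank_diag_block_mx rQ rQ'.
  move=> y; rewrite /= -[y]vsubmxK !mul_block_col !mul0mx !addr0 !add0r.
  rewrite !col_mx_eq0; split.
    move=> [/kQ [x1 [b1 e1]] /kQ' [x2 [b2 e2]]].
    exists (col_mx x1 x2); rewrite !mul_block_col !mul0mx !addr0 !add0r.
    by rewrite b1 b2 col_mx0 e1 e2.
  move=> [x [bx ey]]; move: bx ey; rewrite -[x]vsubmxK !mul_block_col.
  rewrite !mul0mx !addr0 !add0r col_mx_eq0 => -[b1 b2] /eq_col_mx [e1 e2].
  by split; [apply/kQ; exists (usubmx x) | apply/kQ'; exists (dsubmx x)].
- by rewrite /= !mulmx_block !mulmx0 !mul0mx !addr0 !add0r eA eA'.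
- by rewrite /= !mulmx_block !mulmx0 !mul0mx !addr0 !add0r eB eB'.
Qed.

Lemma qrel_reg r (D : 'M[F]_r) : D \in unitmx ->
  qrel (MxPair 1%:M D) (MxPair 1%:M D).
Proof.
move=> uD; exists (1%:M : 'M[F]_r), (1%:M : 'M[F]_r); split => /=.
- split; first exact: mxrank1.
  move=> x; rewrite mul1mx; split => [->|e]; first by rewrite mulmx0.
  by rewrite -(mulKmx uD x) e mulmx0.
- split; first exact: mxrank1.
  move=> y; rewrite mul1mx; split => [->|[x [bx ->]]].
    by exists 0; rewrite !mulmx0.
  by rewrite mul1mx -(mulKmx uD x) bx mulmx0.
- by rewrite mulmx1 ?mul1mx.
- by rewrite mulmx1 ?mul1mx.
Qed.

Lemma qrel_L1 : qrel (summand F (KL, 1%N)) (empty_pair F).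
Proof.
exists 0, 0; split => /=.
- split; first exact: mxrank0.
  by move=> x; split => _; apply: flatmx0.
- split; first exact: mxrank0.
  move=> y; split => _; last exact: flatmx0.
  by exists 0; split; apply/matrixP => -[].
- by apply/matrixP => -[].
- by apply/matrixP => -[].
Qed.

Lemma equiv_empty_l (q : mxpair F) : pair_equiv (dsum (empty_pair F) q) q.
Proof.
have bl : forall a b (X : 'M[F]_(a, b)),
    block_mx (0 : 'M_(0, 0)) 0 0 X = X :> 'M_(a, b).
  move=> a b X; apply/matrixP => i j.
  rewrite !mxE; case: splitP => [[]//|i1 ei]; rewrite !mxE.
  case: splitP => [[]//|j1 ej].
  by congr (X _ _); apply: val_inj.
exists 1%:M, 1%:M, 1%:M, 1%:M; split; first by rewrite !mulmx1.
by rewrite /= !bl mul1mx mulmx1 mul1mx mulmx1.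
Qed.

End L3.

Section L4.
Variable F : fieldType.

Lemma sum_in n c (hc : (c < n)%N) (g : 'I_n -> F) :
  \sum_(l < n) (if val l == c then g l else 0) = g (Ordinal hc).
Proof.
rewrite (bigD1 (Ordinal hc)) //= eqxx big1 ?addr0 // => l ne.
case: eqP => // e; case/eqP: ne; exact: val_inj.
Qed.

Lemma sum_out n c (g : 'I_n -> F) : (n <= c)%N ->
  \sum_(l < n) (if val l == c then g l else 0) = 0.
Proof.
move=> h; rewrite big1 // => l _; case: eqP => // e.
by move: h; rewrite -e leqNgt ltn_ord.
Qed.

Lemma ind_mul (b : bool) (x : F) : (if b then 1 else 0) * x = if b then x else 0.
Proof. by case: b; rewrite ?mul1r ?mul0r. Qed.

Lemma ind_eq n (i i' : 'I_n) : (if val i == val i' then 1 else 0) = (i == i')%:R :> F.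
Proof. by rewrite val_eqE; case: (i == i'). Qed.

Lemma RRt j : Rmx F j.+1 *m (Rmx F j.+1)^T = 1%:M.
Proof.
apply/matrixP => i i'; rewrite !mxE.
under eq_bigr => l _ do rewrite !mxE ind_mul.
have h : (i.+1 < j.+1)%N by rewrite ltnS.
by rewrite (sum_in h) /= eqSS ind_eq.
Qed.

Lemma LLt j : Lmx F j.+1 *m (Lmx F j.+1)^T = 1%:M.
Proof.
apply/matrixP => i i'; rewrite !mxE.
under eq_bigr => l _ do rewrite !mxE ind_mul.
have h : (i < j.+1)%N by rewrite ltnS ltnW.
by rewrite (sum_in h) /= ind_eq.
Qed.

Lemma RL j : Rmx F j.+1 *m Lmx F j.+2 = Lmx F j.+1 *m Rmx F j.+2.
Proof.
apply/matrixP => i l; rewrite !mxE.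
under eq_bigr => a _ do rewrite !mxE ind_mul.
under [in RHS]eq_bigr => a _ do rewrite !mxE ind_mul.
have h1 : (i.+1 < j.+1)%N by rewrite ltnS.
have h2 : (i < j.+1)%N by rewrite ltnS ltnW.
by rewrite (sum_in h1) (sum_in h2).
Qed.

Lemma RLt j : Rmx F j.+2 *m (Lmx F j.+2)^T = (Lmx F j.+1)^T *m Rmx F j.+1.
Proof.
apply/matrixP => i i'; rewrite !mxE.
under eq_bigr => a _ do rewrite !mxE ind_mul.
under [in RHS]eq_bigr => a _ do rewrite !mxE (eq_sym (val i)) ind_mul.
have h1 : (i.+1 < j.+2)%N by rewrite ltnS.
rewrite (sum_in h1) /=.
have [lt|ge] := ltnP i j.
  by rewrite (sum_in lt) /= eq_sym.
rewrite sum_out //; case: eqP => // e.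
by exfalso; move: (ltn_ord i'); rewrite -e /= ltnS ltnNge ge.
Qed.

Lemma qrel_Lk j : qrel (summand F (KL, j.+2)) (summand F (KL, j.+1)).
Proof.
exists (Rmx F j.+2), (Rmx F j.+1); split => /=.
- split; first exact: rank_inv (RRt j.+1).
  by move=> x.
- split; first exact: rank_inv (RRt j).
  move=> y; split.
    move=> e; exists ((Lmx F j.+2)^T *m y); split.
      by rewrite mulmxA RLt -mulmxA e mulmx0.
    by rewrite mulmxA LLt mul1mx.
  by move=> [x [bx ->]]; rewrite mulmxA RL -mulmxA bx mulmx0.
- by rewrite RL.
- done.
Qed.

Lemma Jnil_rank j : (\rank (Jnil F j.+1) < j.+1)%N.
Proof.
rewrite ltn_neqAle rank_leq_row andbT.
apply/negP => /eqP h.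
have [B hB] := free_rinv h.
have r0 : row ord0 (Jnil F j.+1) = 0.
  by apply/matrixP => a b; rewrite !mxE.
have : (delta_mx 0 ord0 : 'rV[F]_j.+1) = 0.
  by rewrite -[delta_mx _ _]mulmx1 -hB mulmxA -rowE r0 mul0mx.
move/matrixP => /(_ ord0 ord0); rewrite !mxE !eqxx /=.
by move/eqP; rewrite oner_eq0.
Qed.

End L4.

Definition isKL (x : kind * nat) : bool := if x.1 is KL then true else false.

Section L5.
Variable F : fieldType.

Definition fold (s : seq (kind * nat)) : mxpair F :=
  foldr (@dsum F) (empty_pair F) (map (@summand F) s).

Lemma qrel_empty : qrel (empty_pair F) (empty_pair F).
Proof.
exists 0, 0; split => /=.
- by split; [exact: mxrank0 | move=> x; split => _; apply/matrixP => -[]].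
- split; first exact: mxrank0.
  move=> y; split => _; last by apply/matrixP => -[].
  by exists 0; split; apply/matrixP => -[].
- by apply/matrixP => -[].
- by apply/matrixP => -[].
Qed.

Lemma qrel_fold s : all (fun x => isKL x && (0 < x.2)%N) s ->
  qrel (fold s) (fold (shift_decomp s)).
Proof.
elim: s => [|[k [|[|j]]] s IH] //=; first by move=> _; exact: qrel_empty.
- by case: k.
- case: k => //= /IH h.
  change (qrel (dsum (summand F (KL, 1%N)) (fold s)) (fold (shift_decomp s))).
  apply: (qrel_equiv_r (qrel_dsum (qrel_L1 F) h)); exact: equiv_empty_l.
- case: k => //= /IH h.
  change (qrel (dsum (summand F (KL, j.+2)) (fold s))
    (dsum (summand F (KL, j.+1)) (fold (shift_decomp s)))).
  exact: qrel_dsum (qrel_Lk F j) h.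
Qed.

Lemma shift_pos s : all (fun x => 0 < x.2)%N s ->
  all (fun x => 0 < x.2)%N (shift_decomp s).
Proof.
elim: s => [|[k [|[|j]]] s IH] //=; case: k => //= /IH //.
Qed.

Lemma rank_sum_split a b c d (X : 'M[F]_(a, b)) (Y : 'M[F]_(c, d)) :
  \rank (block_mx X 0 0 Y) = (a + c)%N -> \rank X = a /\ \rank Y = c.
Proof.
rewrite rank_diag_block_mx; have := rank_leq_row X; have := rank_leq_row Y.
lia.
Qed.

Lemma fold_surj s : all (fun x => 0 < x.2)%N s ->
  \rank (mp_A (fold s)) = mp_m (fold s) ->
  \rank (mp_B (fold s)) = mp_m (fold s) -> all isKL s.
Proof.
elim: s => [|[k n] s IH] //= /andP [/= pn ps].
move=> /rank_sum_split [rA1 rA2] /rank_sum_split [rB1 rB2].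
rewrite (IH ps rA2 rB2) andbT.
case: n pn rA1 rB1 => [|j] // _; case: k => //= rA rB.
- by have := Jnil_rank F j; rewrite rB ltnn.
- by have := Jnil_rank F j; rewrite rA ltnn.
- by have := rank_leq_col (Lmx F j.+1)^T; rewrite rA /=; lia.
Qed.

Lemma count_fold s : all (fun x => isKL x && (0 < x.2)%N) s ->
  (count isL1 s)%:Z = (mp_n (fold s))%:Z - 2 * (mp_m (fold s))%:Z
     + (mp_m (fold (shift_decomp s)))%:Z.
Proof.
elim: s => [|[k [|[|j]]] s IH] //=.
- by case: k.
  case: k => //= /IH.
  change ((count isL1 s)%:Z = (mp_n (fold s))%:Z - 2 * (mp_m (fold s))%:Z
     + (mp_m (fold (shift_decomp s)))%:Z ->
    (1 + count isL1 s)%N%:Z = (1 + mp_n (fold s))%N%:Z - 2 * (0 + mp_m (fold s))%N%:Z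
     + (mp_m (fold (shift_decomp s)))%:Z).
  move=> e; lia.
- case: k => //= /IH.
  change ((count isL1 s)%:Z = (mp_n (fold s))%:Z - 2 * (mp_m (fold s))%:Z
     + (mp_m (fold (shift_decomp s)))%:Z ->
    (0 + count isL1 s)%N%:Z = (j.+2 + mp_n (fold s))%N%:Z - 2 * (j.+1 + mp_m (fold s))%N%:Z
     + (j + mp_m (fold (shift_decomp s)))%N%:Z).
  move=> e; lia.
Qed.

Lemma rank_inv_l a b c (S : 'M[F]_(a, b)) S' (X : 'M[F]_(b, c)) :
  S' *m S = 1%:M -> \rank (S *m X) = \rank X.
Proof.
move=> h; apply/eqP; rewrite eqn_leq mxrankM_maxr /=.
by rewrite {1}(_ : X = S' *m (S *m X)) ?mxrankM_maxr // mulmxA h mul1mx.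
Qed.

Lemma rank_inv_r a b c (R : 'M[F]_(b, c)) R' (X : 'M[F]_(a, b)) :
  R *m R' = 1%:M -> \rank (X *m R) = \rank X.
Proof. by move=> h; rewrite mxrankMfree // (free_of_inv h). Qed.

Lemma equiv_ranks (p q : mxpair F) : pair_equiv p q ->
  \rank (mp_A p) = \rank (mp_A q) /\ \rank (mp_B p) = \rank (mp_B q).
Proof.
move=> [S [S' [R [R' [[h1 h2 h3 h4] [eA eB]]]]]].
by rewrite -(rank_inv_l _ h2) eA (rank_inv_r _ h3) -(rank_inv_l _ h2) eB
   (rank_inv_r _ h3).
Qed.

End L5.

Theorem lemma3 (F : fieldType) (m n : nat) (A1 B1 : 'M[F]_(m, n))
    (m2 n2 : nat) (P : 'M[F]_(n2, n)) (Q : 'M[F]_(m2, m))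
    (A2 B2 : 'M[F]_(m2, n2)) (n3 : nat) (P2 : 'M[F]_(n3, n2)) :
  (* A1, B1 : F^n -> F^m surjective *)
  \rank A1 = m -> \rank B1 = m ->
  (* U2 = U1 / Ker B1 (coordinates via P), V2 = V1 / A1(Ker B1) (via Q) *)
  quotient_map P (fun x => B1 *m x = 0) ->
  quotient_map Q (fun y => exists x, B1 *m x = 0 /\ y = A1 *m x) ->
  (* A2, B2 are the induced maps *)
  A2 *m P = Q *m A1 -> B2 *m P = Q *m B1 ->
  (* U3 = U2 / Ker B2 *)
  quotient_map P2 (fun x => B2 *m x = 0) ->
  forall (r : nat) (D : 'M[F]_r) (s : seq (kind * nat)),
    regdec A1 B1 D s ->
    regdec A2 B2 D (shift_decomp s) /\
    ((count isL1 s)%:Z = n%:Z - 2 * n2%:Z + n3%:Z)%R.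
Proof.
move=> rA1 rB1 hP hQ eA2 eB2 hP2 r D s [uD pos eq].
have [sm sn] := equiv_sizes eq.
have [erA erB] := equiv_ranks eq.
have [rAc rBc] : \rank (mp_A (fold F s)) = mp_m (fold F s) /\
                 \rank (mp_B (fold F s)) = mp_m (fold F s).
  have sm' : m = (r + mp_m (fold F s))%N := sm.
  move: erA erB; rewrite /= !rank_diag_block_mx rA1 rB1 /= mxrank1 (mxrank_unit uD) -/(fold F s).
  have := rank_leq_row D; have := rank_leq_row (mp_A (fold F s));
  have := rank_leq_row (mp_B (fold F s)); lia.
have allKL := fold_surj pos rAc rBc.
have pos' : all (fun x => isKL x && (0 < x.2)%N) s.
  by rewrite all_predI allKL pos.
have qc : qrel (decomp_pair D s) (decomp_pair D (shift_decomp s)).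
  change (qrel (dsum (MxPair 1%:M D) (fold F s)) (dsum (MxPair 1%:M D) (fold F (shift_decomp s)))).
  apply: qrel_dsum; [exact: qrel_reg | exact: qrel_fold].
have q1 : qrel (MxPair A1 B1) (MxPair A2 B2) by exists P, Q; split.
have eq2 := transport eq q1 qc.
split; first by split => //; exact: shift_pos.
have [sm2 _] := equiv_sizes eq2.
move: hP hQ hP2 => [rP kP] [rQ kQ] [rP2 kP2].
have n2m : n2 = m by rewrite -rP -rB1; apply: eqker_rank.
have n3m2 : n3 = m2.
  rewrite -rP2 (eqker_rank kP2) -(mxrankMfree B2 (_ : row_free P)); last first.
    by rewrite /row_free rP.
  by rewrite eB2 mxrankMfree // /row_free rB1.
have e1 : m2 = (r + mp_m (fold F (shift_decomp s)))%N := sm2.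
have e2 : m = (r + mp_m (fold F s))%N := sm.
have e3 : n = (r + mp_n (fold F s))%N := sn.
rewrite (count_fold F pos') n2m n3m2; lia.
Qed.
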